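(* Let $H=(V,F)$ with $V=\{1,\dots,n\}$ be a graph with at least one edge, $k$ an integer, and $\chi:V_0\to\{1,\dots,k\}$ a proper coloring of $H[V_0]$ for some $V_0\subseteq V$. Let $G$ be the graph obtained as follows: start with $G=H$; add vertices $a,a',b,b'$ and edges $\{a,a'\},\{b,b'\},\{a,b\}$; for each $j\in V_0$ with $\chi(j)\in\{2,\dots,k-1\}$ add vertices $j(1),j(2)$ and edges $\{j,j(1)\},\{j,j(2)\},\{j(1),j(2)\},\{a,j\},\{b,j\},\{a,j(2)\},\{b,j(1)\}$; for each $j\in V_0$ with $\chi(j)=1$ add a vertex $j(2)$ and edges $\{j,j(2)\},\{b,j\},\{a,j(2)\}$; for each $j\in V_0$ with $\chi(j)=k$ add a vertex $j(1)$ and edges $\{j,j(1)\},\{a,j\},\{b,j(1)\}$. Then $tw(G)\le tw(H)+2$ and $pw(G)\le pw(H)+4$.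
   Context: $tw$ and $pw$ denote treewidth and pathwidth. *)

(* Defs.v *)
From mathcomp Require Import all_boot.
Set Implicit Arguments. Unset Strict Implicit. Unset Printing Implicit Defensive.

Definition acyclic_rel m (e : rel 'I_m) : Prop :=
  forall s : seq 'I_m, uniq s -> 2 < size s -> ~~ cycle e s.

Definition is_tree m (e : rel 'I_m) : Prop :=
  [/\ 0 < m, symmetric e, irreflexive e,
      (forall i j, connect e i j) & acyclic_rel e].

Definition tw_le (T : finType) (V : {set T}) (E : rel T) (w : nat) : Prop :=
  exists m (e : rel 'I_m) (B : 'I_m -> {set T}),
    is_tree e /\
    [/\ (forall i, B i \subset V),
        (forall v, v \in V -> exists i, v \in B i),
        (forall x y, x \in V -> y \in V -> E x y -> exists i, (x \in B i) && (y \in B i)),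
        (forall v i j, v \in B i -> v \in B j ->
            connect [rel x y | e x y && (v \in B y)] i j)
      & (forall i, #|B i| <= w.+1)].

Definition pw_le (T : finType) (V : {set T}) (E : rel T) (w : nat) : Prop :=
  exists m (B : 'I_m -> {set T}),
    [/\ (forall i, B i \subset V),
        (forall v, v \in V -> exists i, v \in B i),
        (forall x y, x \in V -> y \in V -> E x y -> exists i, (x \in B i) && (y \in B i)),
        (forall v (i j l : 'I_m), i <= j -> j <= l -> v \in B i -> v \in B l -> v \in B j)
      & (forall i, #|B i| <= w.+1)].

(* ambient vertex type: original vertices j, copies j(1), j(2), and a,a',b,b' *)
Definition gvert (n : nat) : finType := ('I_n + ('I_n + ('I_n + 'I_4)))%type.

Section Constr.
Variables (n : nat) (E : rel 'I_n) (k : nat) (V0 : {set 'I_n}) (chi : 'I_n -> nat).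

Definition orig (j : 'I_n) : gvert n := inl j.
Definition vj1 (j : 'I_n) : gvert n := inr (inl j).
Definition vj2 (j : 'I_n) : gvert n := inr (inr (inl j)).
Definition va  : gvert n := inr (inr (inr (@Ordinal 4 0 isT))).
Definition va' : gvert n := inr (inr (inr (@Ordinal 4 1 isT))).
Definition vb  : gvert n := inr (inr (inr (@Ordinal 4 2 isT))).
Definition vb' : gvert n := inr (inr (inr (@Ordinal 4 3 isT))).

Definition midc (j : 'I_n) : bool := (1 < chi j) && (chi j < k).

Definition GV : {set gvert n} :=
  [set x | [|| [exists u, x == orig u],
              x \in [set va; va'; vb; vb'],
              [exists j, [&& j \in V0, midc j || (chi j == k) & x == vj1 j]]
            | [exists j, [&& j \in V0, midc j || (chi j == 1) & x == vj2 j]]]].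

Definition gadj (x y : gvert n) : bool :=
  [|| [exists u, exists v, [&& x == orig u, y == orig v & E u v]],
      (x == va) && (y == va'), (x == vb) && (y == vb'), (x == va) && (y == vb),
      [exists j, [&& j \in V0, midc j &
         [|| (x == orig j) && (y == vj1 j), (x == orig j) && (y == vj2 j),
             (x == vj1 j) && (y == vj2 j), (x == va) && (y == orig j),
             (x == vb) && (y == orig j), (x == va) && (y == vj2 j)
           | (x == vb) && (y == vj1 j)]]],
      [exists j, [&& j \in V0, chi j == 1 &
         [|| (x == orig j) && (y == vj2 j), (x == vb) && (y == orig j)
           | (x == va) && (y == vj2 j)]]]
    | [exists j, [&& j \in V0, chi j == k &
         [|| (x == orig j) && (y == vj1 j), (x == va) && (y == orig j)
           | (x == vb) && (y == vj1 j)]]]].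

Definition GE : rel (gvert n) := fun x y => gadj x y || gadj y x.

End Constr.

(* Main.v *)
Require Import Defs.
From mathcomp Require Import all_boot zify.
Set Implicit Arguments. Unset Strict Implicit. Unset Printing Implicit Defensive.

Lemma connect_hom (T1 T2 : finType) (f : T1 -> T2) (r1 : rel T1) (r2 : rel T2) :
  (forall x y, r1 x y -> r2 (f x) (f y)) ->
  forall x y, connect r1 x y -> connect r2 (f x) (f y).
Proof.
move=> H x y /connectP [p Hp ->]; apply/connectP; exists (map f p).
  by rewrite path_map; apply: sub_path Hp => a b /H.
by rewrite last_map.
Qed.

Lemma prev_neq_next (T : eqType) (s : seq T) x :
  uniq s -> 2 < size s -> x \in s -> prev s x != next s x.
Proof.
move=> Hu Hs /rot_to [i s' Hr].
rewrite -(prev_rot i Hu) -(next_rot i Hu) Hr.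
have : uniq (x :: s') by rewrite -Hr rot_uniq.
have : 2 < size (x :: s') by rewrite -Hr size_rot.
case: s' {Hr} => [|y [|z t]] // _ Hp.
apply/eqP => Heq.
have H1 := next_prev Hp x.
rewrite Heq in H1.
move: Hp H1 => /= /and3P [Hx Hy _].
move: Hx Hy; rewrite !inE !negb_or => /and3P [Hxy Hxz Hxt] /andP [Hyz _].
rewrite /= eqxx eqxx eq_sym (negbTE Hxy) => Hzx.
by move: Hxz; rewrite Hzx eqxx.
Qed.

Lemma leaf_not_in_cycle (T : eqType) (r : rel T) (s : seq T) x :
  symmetric r -> uniq s -> 2 < size s -> cycle r s -> x \in s ->
  (forall y z, r x y -> r x z -> y = z) -> False.
Proof.
move=> Hsym Hu Hs Hc Hx H.
have H1 := prev_cycle Hc Hx. have H2 := next_cycle Hc Hx.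
rewrite Hsym in H1.
by move: (prev_neq_next Hu Hs Hx); rewrite (H _ _ H1 H2) eqxx.
Qed.

Lemma tw_le_fin (T U : finType) (V : {set U}) (E : rel U) w (e : rel T)
  (B : T -> {set U}) :
  0 < #|T| -> symmetric e -> irreflexive e -> (forall i j, connect e i j) ->
  (forall s : seq T, uniq s -> 2 < size s -> ~~ cycle e s) ->
  (forall i, B i \subset V) ->
  (forall v, v \in V -> exists i, v \in B i) ->
  (forall x y, x \in V -> y \in V -> E x y -> exists i, (x \in B i) && (y \in B i)) ->
  (forall v i j, v \in B i -> v \in B j ->
            connect [rel x y | e x y && (v \in B y)] i j) ->
  (forall i, #|B i| <= w.+1) -> tw_le V E w.
Proof.
move=> HT Hsym Hirr Hcon Hac H1 H2 H3 H4 H5.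
pose f := @enum_val T predT. pose g := @enum_rank T.
have fK : cancel f g by move=> i; rewrite /f /g enum_valK.
have gK : cancel g f by move=> i; rewrite /f /g enum_rankK.
have tr : forall (r : rel T) x y, connect r (f x) (f y) -> connect (relpre f r) x y.
  move=> r x y H; rewrite -(fK x) -(fK y).
  apply: (@connect_hom _ _ g r (relpre f r) _ _ _ H) => a b /=; by rewrite !gK.
exists #|T|, (relpre f e), (fun i => B (f i)); split.
  split => //.
  - by move=> a b /=; rewrite Hsym.
  - by move=> a /=; rewrite Hirr.
  - by move=> a b; apply: tr.
  - move=> s Hu Hs; rewrite -cycle_map; apply: Hac.
    + by rewrite map_inj_uniq //; apply: (can_inj fK).
    + by rewrite size_map.
split => //.
- by move=> v /H2 [i Hi]; exists (g i); rewrite gK.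
- by move=> x y Hx Hy /(H3 _ _ Hx Hy) [i Hi]; exists (g i); rewrite gK.
- by move=> v i j Hi Hj; exact: (tr [rel x y | e x y && (v \in B y)] _ _ (H4 _ _ _ Hi Hj)).
Qed.

Variant gv_spec n : gvert n -> Type :=
| GVo u : gv_spec (orig u) | GV1 j : gv_spec (vj1 j) | GV2 j : gv_spec (vj2 j)
| GVa : gv_spec (va n) | GVa' : gv_spec (va' n) | GVb : gv_spec (vb n)
| GVb' : gv_spec (vb' n).

Lemma gvP n (x : gvert n) : gv_spec x.
Proof.
case: x => [u|[j|[j|c]]]; first exact: GVo.
- exact: GV1. - exact: GV2.
case: c => [[|[|[|[|c]]]] Hc] //.
- by rewrite (bool_irrelevance Hc isT); exact: GVa.
- by rewrite (bool_irrelevance Hc isT); exact: GVa'.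
- by rewrite (bool_irrelevance Hc isT); exact: GVb.
- by rewrite (bool_irrelevance Hc isT); exact: GVb'.
Qed.

Section GVmem.
Variables (n : nat) (k : nat) (V0 : {set 'I_n}) (chi : 'I_n -> nat).
Lemma orig_GV u : orig u \in GV k V0 chi.
Proof. by rewrite inE; apply/orP; left; apply/existsP; exists u. Qed.
Lemma va_GV : va n \in GV k V0 chi.
Proof. by rewrite inE !inE eqxx /= orbT. Qed.
Lemma va'_GV : va' n \in GV k V0 chi.
Proof. by rewrite inE !inE eqxx /= !orbT. Qed.
Lemma vb_GV : vb n \in GV k V0 chi.
Proof. by rewrite inE !inE eqxx /= !orbT. Qed.
Lemma vb'_GV : vb' n \in GV k V0 chi.
Proof. by rewrite inE !inE eqxx /= !orbT. Qed.
Lemma vj1_GV j : (vj1 j \in GV k V0 chi) = (j \in V0) && (midc k chi j || (chi j == k)).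
Proof.
rewrite inE !inE /=.
apply/idP/idP.
- case/or3P.
  + by case/existsP.
  + by case/existsP => j' /and3P [H1 H2 /eqP [->]]; rewrite H1 H2.
  + by case/existsP => j' /and3P [H1 H2 /eqP].
- move=> /andP [H1 H2]; apply/or3P; apply: Or32; apply/existsP; exists j.
  by rewrite H1 H2 eqxx.
Qed.
Lemma vj2_GV j : (vj2 j \in GV k V0 chi) = (j \in V0) && (midc k chi j || (chi j == 1)).
Proof.
rewrite inE !inE /=.
apply/idP/idP.
- case/or3P.
  + by case/existsP.
  + by case/existsP => j' /and3P [H1 H2 /eqP].
  + by case/existsP => j' /and3P [H1 H2 /eqP [->]]; rewrite H1 H2.
- move=> /andP [H1 H2]; apply/or3P; apply: Or33; apply/existsP; exists j.
  by rewrite H1 H2 eqxx.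
Qed.
End GVmem.

Lemma eqs_orig_orig n (u v : 'I_n) : (orig u == orig v :> gvert n) = (u == v). Proof. by []. Qed.
Lemma eqs_orig_vj1 n (u v : 'I_n) : (orig u == vj1 v :> gvert n) = false. Proof. by []. Qed.
Lemma eqs_orig_vj2 n (u v : 'I_n) : (orig u == vj2 v :> gvert n) = false. Proof. by []. Qed.
Lemma eqs_orig_va n (u : 'I_n) : (orig u == va n :> gvert n) = false. Proof. by []. Qed.
Lemma eqs_orig_va1 n (u : 'I_n) : (orig u == va' n :> gvert n) = false. Proof. by []. Qed.
Lemma eqs_orig_vb n (u : 'I_n) : (orig u == vb n :> gvert n) = false. Proof. by []. Qed.
Lemma eqs_orig_vb1 n (u : 'I_n) : (orig u == vb' n :> gvert n) = false. Proof. by []. Qed.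
Lemma eqs_vj1_orig n (u v : 'I_n) : (vj1 u == orig v :> gvert n) = false. Proof. by []. Qed.
Lemma eqs_vj1_vj1 n (u v : 'I_n) : (vj1 u == vj1 v :> gvert n) = (u == v). Proof. by []. Qed.
Lemma eqs_vj1_vj2 n (u v : 'I_n) : (vj1 u == vj2 v :> gvert n) = false. Proof. by []. Qed.
Lemma eqs_vj1_va n (u : 'I_n) : (vj1 u == va n :> gvert n) = false. Proof. by []. Qed.
Lemma eqs_vj1_va1 n (u : 'I_n) : (vj1 u == va' n :> gvert n) = false. Proof. by []. Qed.
Lemma eqs_vj1_vb n (u : 'I_n) : (vj1 u == vb n :> gvert n) = false. Proof. by []. Qed.
Lemma eqs_vj1_vb1 n (u : 'I_n) : (vj1 u == vb' n :> gvert n) = false. Proof. by []. Qed.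
Lemma eqs_vj2_orig n (u v : 'I_n) : (vj2 u == orig v :> gvert n) = false. Proof. by []. Qed.
Lemma eqs_vj2_vj1 n (u v : 'I_n) : (vj2 u == vj1 v :> gvert n) = false. Proof. by []. Qed.
Lemma eqs_vj2_vj2 n (u v : 'I_n) : (vj2 u == vj2 v :> gvert n) = (u == v). Proof. by []. Qed.
Lemma eqs_vj2_va n (u : 'I_n) : (vj2 u == va n :> gvert n) = false. Proof. by []. Qed.
Lemma eqs_vj2_va1 n (u : 'I_n) : (vj2 u == va' n :> gvert n) = false. Proof. by []. Qed.
Lemma eqs_vj2_vb n (u : 'I_n) : (vj2 u == vb n :> gvert n) = false. Proof. by []. Qed.
Lemma eqs_vj2_vb1 n (u : 'I_n) : (vj2 u == vb' n :> gvert n) = false. Proof. by []. Qed.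
Lemma eqs_va_orig n (v : 'I_n) : (va n == orig v :> gvert n) = false. Proof. by []. Qed.
Lemma eqs_va_vj1 n (v : 'I_n) : (va n == vj1 v :> gvert n) = false. Proof. by []. Qed.
Lemma eqs_va_vj2 n (v : 'I_n) : (va n == vj2 v :> gvert n) = false. Proof. by []. Qed.
Lemma eqs_va_va n  : (va n == va n :> gvert n) = true. Proof. by []. Qed.
Lemma eqs_va_va1 n  : (va n == va' n :> gvert n) = false. Proof. by []. Qed.
Lemma eqs_va_vb n  : (va n == vb n :> gvert n) = false. Proof. by []. Qed.
Lemma eqs_va_vb1 n  : (va n == vb' n :> gvert n) = false. Proof. by []. Qed.
Lemma eqs_va1_orig n (v : 'I_n) : (va' n == orig v :> gvert n) = false. Proof. by []. Qed.
Lemma eqs_va1_vj1 n (v : 'I_n) : (va' n == vj1 v :> gvert n) = false. Proof. by []. Qed.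
Lemma eqs_va1_vj2 n (v : 'I_n) : (va' n == vj2 v :> gvert n) = false. Proof. by []. Qed.
Lemma eqs_va1_va n  : (va' n == va n :> gvert n) = false. Proof. by []. Qed.
Lemma eqs_va1_va1 n  : (va' n == va' n :> gvert n) = true. Proof. by []. Qed.
Lemma eqs_va1_vb n  : (va' n == vb n :> gvert n) = false. Proof. by []. Qed.
Lemma eqs_va1_vb1 n  : (va' n == vb' n :> gvert n) = false. Proof. by []. Qed.
Lemma eqs_vb_orig n (v : 'I_n) : (vb n == orig v :> gvert n) = false. Proof. by []. Qed.
Lemma eqs_vb_vj1 n (v : 'I_n) : (vb n == vj1 v :> gvert n) = false. Proof. by []. Qed.
Lemma eqs_vb_vj2 n (v : 'I_n) : (vb n == vj2 v :> gvert n) = false. Proof. by []. Qed.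
Lemma eqs_vb_va n  : (vb n == va n :> gvert n) = false. Proof. by []. Qed.
Lemma eqs_vb_va1 n  : (vb n == va' n :> gvert n) = false. Proof. by []. Qed.
Lemma eqs_vb_vb n  : (vb n == vb n :> gvert n) = true. Proof. by []. Qed.
Lemma eqs_vb_vb1 n  : (vb n == vb' n :> gvert n) = false. Proof. by []. Qed.
Lemma eqs_vb1_orig n (v : 'I_n) : (vb' n == orig v :> gvert n) = false. Proof. by []. Qed.
Lemma eqs_vb1_vj1 n (v : 'I_n) : (vb' n == vj1 v :> gvert n) = false. Proof. by []. Qed.
Lemma eqs_vb1_vj2 n (v : 'I_n) : (vb' n == vj2 v :> gvert n) = false. Proof. by []. Qed.
Lemma eqs_vb1_va n  : (vb' n == va n :> gvert n) = false. Proof. by []. Qed.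
Lemma eqs_vb1_va1 n  : (vb' n == va' n :> gvert n) = false. Proof. by []. Qed.
Lemma eqs_vb1_vb n  : (vb' n == vb n :> gvert n) = false. Proof. by []. Qed.
Lemma eqs_vb1_vb1 n  : (vb' n == vb' n :> gvert n) = true. Proof. by []. Qed.
Definition eqsimp := (eqs_orig_orig, (eqs_orig_vj1, (eqs_orig_vj2, (eqs_orig_va, (eqs_orig_va1, (eqs_orig_vb, (eqs_orig_vb1, (eqs_vj1_orig, (eqs_vj1_vj1, (eqs_vj1_vj2, (eqs_vj1_va, (eqs_vj1_va1, (eqs_vj1_vb, (eqs_vj1_vb1, (eqs_vj2_orig, (eqs_vj2_vj1, (eqs_vj2_vj2, (eqs_vj2_va, (eqs_vj2_va1, (eqs_vj2_vb, (eqs_vj2_vb1, (eqs_va_orig, (eqs_va_vj1, (eqs_va_vj2, (eqs_va_va, (eqs_va_va1, (eqs_va_vb, (eqs_va_vb1, (eqs_va1_orig, (eqs_va1_vj1, (eqs_va1_vj2, (eqs_va1_va, (eqs_va1_va1, (eqs_va1_vb, (eqs_va1_vb1, (eqs_vb_orig, (eqs_vb_vj1, (eqs_vb_vj2, (eqs_vb_va, (eqs_vb_va1, (eqs_vb_vb, (eqs_vb_vb1, (eqs_vb1_orig, (eqs_vb1_vj1, (eqs_vb1_vj2, (eqs_vb1_va, (eqs_vb1_va1, (eqs_vb1_vb, eqs_vb1_vb1)))))))))))))))))))))))))))))))))))))))))))))))).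

Lemma leaf_not_in_cycle2 (T : eqType) (r : rel T) (s : seq T) x :
  symmetric r -> uniq s -> 2 < size s -> cycle r s -> x \in s ->
  (forall y z, y \in s -> z \in s -> r x y -> r x z -> y = z) -> False.
Proof.
move=> Hsym Hu Hs Hc Hx H.
have H1 := prev_cycle Hc Hx. have H2 := next_cycle Hc Hx.
rewrite Hsym in H1.
move: (prev_neq_next Hu Hs Hx).
by rewrite (H _ _ _ _ H1 H2) ?eqxx // ?mem_prev ?mem_next.
Qed.

Lemma all_inl (A B : eqType) (s : seq (A + B)) :
  (forall x, x \in s -> exists a, x = inl a) ->
  exists s' : seq A, s = map inl s'.
Proof.
elim: s => [|x s IH] H; first by exists [::].
have [a ->] := H x (mem_head _ _).
have [s' ->] : exists s' : seq A, s = map inl s'.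
  by apply: IH => y Hy; apply: H; rewrite inE Hy orbT.
by exists (a :: s').
Qed.

Lemma orig_imset n (A : {set 'I_n}) u : (orig u \in @orig n @: A) = (u \in A).
Proof. by rewrite mem_imset // => a b []. Qed.
Lemma inr_imset n (A : {set 'I_n}) z : (inr z \in @orig n @: A) = false.
Proof. by apply/imsetP => [[x _]]. Qed.

Lemma card4 (T : finType) (a b c d : T) : #|[set a; b; c; d]| <= 4.
Proof.
apply: (leq_trans (leq_card_setU _ _)); rewrite cards1 addn1 ltnS.
apply: (leq_trans (leq_card_setU _ _)); rewrite cards1 addn1 ltnS cards2.
by case: (_ != _).
Qed.

Section TW.
Variables (n : nat) (E : rel 'I_n) (k : nat) (V0 : {set 'I_n}) (chi : 'I_n -> nat).
Variables (m : nat) (e : rel 'I_m) (B : 'I_m -> {set 'I_n}) (i0 : 'I_m) (p : 'I_n -> 'I_m).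

Definition tnode := ('I_m + option ('I_n * bool))%type.
Definition te (x y : tnode) : bool :=
  match x, y with
  | inl i, inl i' => e i i'
  | inl i, inr (Some (j, false)) => i == p j
  | inr (Some (j, false)), inl i => i == p j
  | inr (Some (j, false)), inr (Some (j', true)) => j == j'
  | inr (Some (j, true)), inr (Some (j', false)) => j == j'
  | inl i, inr None => i == i0
  | inr None, inl i => i == i0
  | _, _ => false
  end.
Definition tB (x : tnode) : {set gvert n} :=
  match x with
  | inl i => ((@orig n @: B i) :|: [set va n; vb n]) :&: GV k V0 chi
  | inr (Some (j, false)) => [set orig j; va n; vb n; vj1 j] :&: GV k V0 chi
  | inr (Some (j, true)) => [set orig j; va n; vj1 j; vj2 j] :&: GV k V0 chi
  | inr None => [set va n; va' n; vb n; vb' n] :&: GV k V0 chi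
  end.

Hypothesis esym : symmetric e.
Hypothesis eirr : irreflexive e.
Hypothesis econ : forall i j, connect e i j.
Hypothesis eac : acyclic_rel e.
Hypothesis Bcon : forall v i j, v \in B i -> v \in B j ->
            connect [rel x y | e x y && (v \in B y)] i j.
Hypothesis Hp : forall j, j \in B (p j).

Lemma te_sym : symmetric te.
Proof.
case=> [i|[[j []]|]] [i'|[[j' []]|]] //=; by rewrite eq_sym.
Qed.
Lemma te_irr : irreflexive te.
Proof. by case=> [i|[[j []]|]] //=. Qed.

Lemma te_acyc : forall s : seq tnode, uniq s -> 2 < size s -> ~~ cycle te s.
Proof.
move=> s Hu Hs; apply/negP => Hc.
have Htrue : forall j, inr (Some (j, true)) \notin s.
  move=> j; apply/negP => Hx; apply: (leaf_not_in_cycle2 te_sym Hu Hs Hc Hx).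
  move=> y z _ _; case: y => [?|[[j1 []]|]] //=; case: z => [?|[[j2 []]|]] //=.
  by move=> /eqP <- /eqP <-.
have Hnone : inr None \notin s.
  apply/negP => Hx; apply: (leaf_not_in_cycle2 te_sym Hu Hs Hc Hx).
  move=> y z _ _; case: y => [?|[[j1 []]|]] //=; case: z => [?|[[j2 []]|]] //=.
  by move=> /eqP -> /eqP ->.
have Hfalse : forall j, inr (Some (j, false)) \notin s.
  move=> j; apply/negP => Hx; apply: (leaf_not_in_cycle2 te_sym Hu Hs Hc Hx).
  move=> y z; case: y => [?|[[j1 []]|]] //=; case: z => [?|[[j2 []]|]] //=.
  - by move=> _ _ /eqP -> /eqP ->.
  - by move=> _ H _ /eqP Hj; move: H; rewrite -Hj (negbTE (Htrue j)).
  - by move=> H _ /eqP Hj; move: H; rewrite -Hj (negbTE (Htrue j)).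
  - by move=> H _ /eqP Hj; move: H; rewrite -Hj (negbTE (Htrue j)).
have [s' Hs'] : exists s', s = map inl s'.
  apply: all_inl => x; case: x => [i|[[j []]|]] Hx; first by exists i.
  - by rewrite (negbTE (Htrue j)) in Hx.
  - by rewrite (negbTE (Hfalse j)) in Hx.
  - by rewrite (negbTE Hnone) in Hx.
subst s.
rewrite map_inj_uniq in Hu; last by move=> a b [].
rewrite size_map in Hs.
rewrite cycle_map in Hc.
by move: (eac Hu Hs); rewrite Hc.
Qed.

Lemma te_conn : forall x y, connect te x y.
Proof.
have Hl : forall i, connect te (inl i) (inl i0).
  move=> i; exact: (@connect_hom _ _ inl e te (fun a b h => h) _ _ (econ i i0)).
have H0 : forall x, connect te x (inl i0).
  case=> [i|[[j []]|]].
  - exact: Hl.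
  - apply: (@connect_trans _ _ (inr (Some (j, false)))).
      by apply: connect1; rewrite /= eqxx.
    apply: (connect_trans (connect1 _)) (Hl (p j)).
    by rewrite /= eqxx.
  - apply: (connect_trans (connect1 _)) (Hl (p j)).
    by rewrite /= eqxx.
  - apply: (connect_trans (connect1 _)) (Hl i0).
    by rewrite /= eqxx.
move=> x y; apply: connect_trans (H0 x) _.
by rewrite (sym_connect_sym te_sym); exact: H0.
Qed.

Hypothesis Bcov : forall v : 'I_n, exists i, v \in B i.
Hypothesis Bedge : forall x y, E x y -> exists i, (x \in B i) && (y \in B i).

Ltac memt := rewrite /= in_setI ?orig_GV ?va_GV ?vb_GV ?va'_GV ?vb'_GV ?andbT;
  try (apply/andP; split => //); rewrite !inE ?orig_imset ?inr_imset ?Hp ?eqxx ?orbT.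

Lemma tB_sub x : tB x \subset GV k V0 chi.
Proof. by case: x => [i|[[j []]|]]; apply: subsetIr. Qed.

Lemma tB_card w : 1 <= w -> (forall i, #|B i| <= w.+1) -> forall x, #|tB x| <= (w + 2).+1.
Proof.
move=> Hw HB x; case: x => [i|[[j []]|]] /=; apply: leq_trans (subset_leq_card (subsetIl _ _)) _.
- apply: leq_trans (leq_card_setU _ _) _.
  have := leq_imset_card (@orig n) (B i); have := HB i.
  rewrite cards2 => H1 H2; have H3 := leq_trans H2 H1.
  apply: leq_trans (leq_add H3 (leqnn _)) _.
  case: (_ != _) => /=; lia.
- apply: leq_trans (card4 _ _ _ _) _; lia.
- apply: leq_trans (card4 _ _ _ _) _; lia.
- apply: leq_trans (card4 _ _ _ _) _; lia.
Qed.

Lemma tB_cover v : v \in GV k V0 chi -> exists x, v \in tB x.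
Proof.
move=> Hv; case: (gvP v) Hv => [u Hv|j Hv|j Hv|Hv|Hv|Hv|Hv].
- by exists (inl (p u)); memt.
- by exists (inr (Some (j, false))); memt.
- by exists (inr (Some (j, true))); memt.
- by exists (inr None); memt.
- by exists (inr None); memt.
- by exists (inr None); memt.
- by exists (inr None); memt.
Qed.

Ltac fin z := by exists z; apply/andP; split; memt.

Lemma tB_gadj x y : x \in GV k V0 chi -> y \in GV k V0 chi ->
  gadj E k V0 chi x y -> exists z, (x \in tB z) && (y \in tB z).
Proof.
move=> Hx Hy; rewrite /gadj.
case/orP => [/existsP [u /existsP [v /and3P [/eqP Ex /eqP Ey Huv]]]|].
  subst; have [i /andP [H1 H2]] := Bedge Huv.
  by exists (inl i); apply/andP; split; memt; rewrite ?H1 ?H2.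
case/orP => [/andP [/eqP ? /eqP ?]|]; first by subst; fin (inr None : tnode).
case/orP => [/andP [/eqP ? /eqP ?]|]; first by subst; fin (inr None : tnode).
case/orP => [/andP [/eqP ? /eqP ?]|]; first by subst; fin (inr None : tnode).
case/orP => [/existsP [j /and3P [Hj Hm H]]|].
  case/orP: H => [/andP [/eqP ? /eqP ?]|]; first by subst; fin (inr (Some (j, false)) : tnode).
  case/orP => [/andP [/eqP ? /eqP ?]|]; first by subst; fin (inr (Some (j, true)) : tnode).
  case/orP => [/andP [/eqP ? /eqP ?]|]; first by subst; fin (inr (Some (j, true)) : tnode).
  case/orP => [/andP [/eqP ? /eqP ?]|]; first by subst; fin (inr (Some (j, false)) : tnode).
  case/orP => [/andP [/eqP ? /eqP ?]|]; first by subst; fin (inr (Some (j, false)) : tnode).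
  case/orP => [/andP [/eqP ? /eqP ?]|]; first by subst; fin (inr (Some (j, true)) : tnode).
  by case/andP => [/eqP ? /eqP ?]; subst; fin (inr (Some (j, false)) : tnode).
case/orP => [/existsP [j /and3P [Hj Hm H]]|].
  case/orP: H => [/andP [/eqP ? /eqP ?]|]; first by subst; fin (inr (Some (j, true)) : tnode).
  case/orP => [/andP [/eqP ? /eqP ?]|]; first by subst; fin (inr (Some (j, false)) : tnode).
  by case/andP => [/eqP ? /eqP ?]; subst; fin (inr (Some (j, true)) : tnode).
case/existsP => [j /and3P [Hj Hm H]].
case/orP: H => [/andP [/eqP ? /eqP ?]|]; first by subst; fin (inr (Some (j, false)) : tnode).
case/orP => [/andP [/eqP ? /eqP ?]|]; first by subst; fin (inr (Some (j, false)) : tnode).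
by case/andP => [/eqP ? /eqP ?]; subst; fin (inr (Some (j, false)) : tnode).
Qed.

Lemma tB_edge x y : x \in GV k V0 chi -> y \in GV k V0 chi ->
  GE E k V0 chi x y -> exists z, (x \in tB z) && (y \in tB z).
Proof.
move=> Hx Hy /orP [H|H]; first exact: tB_gadj.
by have [z Hz] := tB_gadj Hy Hx H; exists z; rewrite andbC.
Qed.

Ltac simpx := let Hv := fresh in let Hg := fresh in move=> Hv; have Hg := tB_GV Hv; move: Hv;
  rewrite /= in_setI Hg andbT !inE ?orig_imset ?inr_imset ?eqsimp ?orbF ?orFb; clear Hg.
Ltac st H := apply: H; try (by rewrite /te /= ?eqxx); by memt.

Lemma tB_GV v x : v \in tB x -> v \in GV k V0 chi.
Proof. by move/(subsetP (tB_sub x)). Qed.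

Definition Rv v := [rel a b | te a b && (v \in tB b)].

Lemma tB_hub v : exists h, forall x, v \in tB x ->
  connect (Rv v) x h && connect (Rv v) h x.
Proof.
have step : forall a b, te a b -> v \in tB a -> v \in tB b ->
    connect (Rv v) a b && connect (Rv v) b a.
  move=> a b Hab Ha Hb; apply/andP; split; apply: connect1; rewrite /= ?Hab ?Ha ?Hb //.
  by rewrite te_sym Hab.
have tr : forall a b c, connect (Rv v) a b && connect (Rv v) b a ->
    connect (Rv v) b c && connect (Rv v) c b -> connect (Rv v) a c && connect (Rv v) c a.
  move=> a b c /andP [H1 H2] /andP [H3 H4]; apply/andP; split.
  - exact: connect_trans H1 H3.
  - exact: connect_trans H4 H2.
have refl : forall a, connect (Rv v) a a && connect (Rv v) a a by move=> a; rewrite connect0.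
have simpH : forall x, v \in tB x -> v \in tB x by [].
case: (gvP v) step tr refl simpH => [u|j|j| | | |] step tr refl simpH.
- exists (inl (p u)) => x; case: x => [i|[[j' []]|]] Hx.
  + have Hi : u \in B i by move: Hx; simpx.
    have hom : forall a b, e a b && (u \in B b) ->
        Rv (orig u) (inl a) (inl b).
      by move=> a b /andP [H1 H2]; rewrite /Rv /= H1 /=; memt; rewrite H2.
    apply/andP; split.
    * exact: (@connect_hom _ _ inl _ (Rv (orig u)) hom _ _ (Bcon Hi (Hp u))).
    * exact: (@connect_hom _ _ inl _ (Rv (orig u)) hom _ _ (Bcon (Hp u) Hi)).
  + move: Hx; simpx; move=> /eqP Hj; rewrite -Hj.
    apply: (tr _ (inr (Some (u, false)) : tnode)); st step.
  + move: Hx; simpx; move=> /eqP Hj; rewrite -Hj; st step.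
  + by move: Hx; simpx.
- exists (inr (Some (j, false))) => x; case: x => [i|[[j' []]|]] Hx; have Hv := tB_GV Hx.
  + by move: Hx; simpx.
  + move: Hx; simpx; move=> /eqP Hj; rewrite -Hj; st step.
  + by move: Hx; simpx; move=> /eqP Hj; rewrite -Hj.
  + by move: Hx; simpx.
- exists (inr (Some (j, true))) => x; case: x => [i|[[j' []]|]] Hx; have Hv := tB_GV Hx.
  + by move: Hx; simpx.
  + by move: Hx; simpx; move=> /eqP Hj; rewrite -Hj.
  + by move: Hx; simpx.
  + by move: Hx; simpx.
- have Hl : forall i, connect (Rv (va n)) (inl i) (inl i0) && connect (Rv (va n)) (inl i0) (inl i).
    have hom : forall a b, e a b -> Rv (va n) (inl a) (inl b).
      by move=> a b H; rewrite /Rv /= H /=; memt.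
    move=> i; apply/andP; split.
    * exact: (@connect_hom _ _ inl _ (Rv (va n)) hom _ _ (econ i i0)).
    * exact: (@connect_hom _ _ inl _ (Rv (va n)) hom _ _ (econ i0 i)).
  exists (inl i0) => x; case: x => [i|[[j' []]|]] Hx.
  + exact: Hl.
  + apply: (tr _ (inr (Some (j', false)) : tnode)); first by st step.
    apply: (tr _ (inl (p j') : tnode)); first by st step.
    exact: Hl.
  + apply: (tr _ (inl (p j') : tnode)); first by st step.
    exact: Hl.
  + by st step.
- exists (inr None) => x; case: x => [i|[[j' []]|]] Hx //; by move: Hx; simpx.
- have Hl : forall i, connect (Rv (vb n)) (inl i) (inl i0) && connect (Rv (vb n)) (inl i0) (inl i).
    have hom : forall a b, e a b -> Rv (vb n) (inl a) (inl b).
      by move=> a b H; rewrite /Rv /= H /=; memt.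
    move=> i; apply/andP; split.
    * exact: (@connect_hom _ _ inl _ (Rv (vb n)) hom _ _ (econ i i0)).
    * exact: (@connect_hom _ _ inl _ (Rv (vb n)) hom _ _ (econ i0 i)).
  exists (inl i0) => x; case: x => [i|[[j' []]|]] Hx.
  + exact: Hl.
  + by move: Hx; simpx.
  + apply: (tr _ (inl (p j') : tnode)); first by st step.
    exact: Hl.
  + by st step.
- exists (inr None) => x; case: x => [i|[[j' []]|]] Hx //; by move: Hx; simpx.
Qed.

Lemma tB_conn v x y : v \in tB x -> v \in tB y ->
  connect [rel a b | te a b && (v \in tB b)] x y.
Proof.
have [h Hh] := tB_hub v.
move=> /Hh /andP [H1 _] /Hh /andP [_ H2].
exact: connect_trans H1 H2.
Qed.

End TW.

Lemma tw_part (n : nat) (E : rel 'I_n) (k : nat) (V0 : {set 'I_n}) (chi : 'I_n -> nat) :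
  irreflexive E -> (exists u v, E u v) ->
  forall w, tw_le [set: 'I_n] E w -> tw_le (GV k V0 chi) (GE E k V0 chi) (w + 2).
Proof.
move=> Eirr [u [v Euv]] w [m [e [B [[Hm esym eirr econ eac] [H1 H2 H3 H4 H5]]]]].
pose i0 : 'I_m := Ordinal Hm.
pose p (j : 'I_n) := odflt i0 [pick i | j \in B i].
have Hp : forall j, j \in B (p j).
  move=> j; rewrite /p; case: pickP => [i Hi|Hn] //=.
  have [i Hi] := H2 j (in_setT j); by move: (Hn i); rewrite Hi.
have Bcov : forall v : 'I_n, exists i, v \in B i.
  by move=> x; apply: H2; rewrite in_setT.
have Bedge : forall x y, E x y -> exists i, (x \in B i) && (y \in B i).
  by move=> x y; apply: H3; rewrite in_setT.
have Hw : 0 < w.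
  have [i /andP [Hu Hv]] := Bedge _ _ Euv.
  have Huv : u != v by apply/eqP => Huv; move: Euv; rewrite Huv Eirr.
  have : #|[set u; v]| <= #|B i|.
    apply: subset_leq_card; apply/subsetP => x; rewrite !inE => /orP [] /eqP ->; done.
  rewrite cards2 Huv => H; have := H5 i; lia.
apply: (@tw_le_fin (tnode n m) _ _ _ _ (te e i0 p) (tB k V0 chi B)).
- by apply/card_gt0P; exists (inl i0).
- exact: te_sym.
- exact: te_irr.
- exact: te_conn.
- move=> s; exact: te_acyc.
- exact: tB_sub.
- move=> x; exact: tB_cover.
- move=> x y; exact: tB_edge.
- move=> x i j; exact: tB_conn.
- exact: tB_card.
Qed.

Section PW.
Variables (n : nat) (E : rel 'I_n) (k : nat) (V0 : {set 'I_n}) (chi : 'I_n -> nat).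
Variables (m : nat) (B : 'I_m -> {set 'I_n}) (p : 'I_n -> 'I_m).

Lemma qo_lt (x : 'I_(m * n.+1)) : x %/ n.+1 < m.
Proof. by rewrite ltn_divLR // (ltn_ord x). Qed.
Definition qo (x : 'I_(m * n.+1)) : 'I_m := Ordinal (qo_lt x).

Definition extra (x : 'I_(m * n.+1)) : {set gvert n} :=
  if (x : nat) == 0 then [set va' n; vb' n]
  else if [pick j : 'I_n | (x %% n.+1 == j.+1) && (p j == qo x)] is Some j
       then [set vj1 j; vj2 j] else set0.

Definition PB (x : 'I_(m * n.+1)) : {set gvert n} :=
  ((@orig n @: B (qo x)) :|: [set va n; vb n] :|: extra x) :&: GV k V0 chi.

Lemma extra_vj1 x j : (vj1 j \in extra x) = [&& (x : nat) != 0, x %% n.+1 == j.+1 & p j == qo x].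
Proof.
rewrite /extra; case: ifP => H; rewrite ?H /=; first by rewrite !inE !eqsimp.
case: pickP => [j' /andP [H1 H2]|Hn].
  rewrite !inE !eqsimp orbF; apply/eqP/andP => [->|[/eqP H3 /eqP H4]]; first by rewrite H1 H2.
  by apply: val_inj; move: H1; rewrite H3 => /eqP [].
by rewrite inE; move: (Hn j) => /= ->.
Qed.
Lemma extra_vj2 x j : (vj2 j \in extra x) = [&& (x : nat) != 0, x %% n.+1 == j.+1 & p j == qo x].
Proof.
rewrite /extra; case: ifP => H; rewrite ?H /=; first by rewrite !inE !eqsimp.
case: pickP => [j' /andP [H1 H2]|Hn].
  rewrite !inE !eqsimp; apply/eqP/andP => [->|[/eqP H3 /eqP H4]]; first by rewrite H1 H2.
  by apply: val_inj; move: H1; rewrite H3 => /eqP [].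
by rewrite inE; move: (Hn j) => /= ->.
Qed.
Lemma extra_va' x : (va' n \in extra x) = ((x : nat) == 0).
Proof.
rewrite /extra; case: ifP => H; rewrite ?H /=; first by rewrite !inE !eqsimp.
by case: pickP => [j' _|_]; rewrite !inE ?eqsimp.
Qed.
Lemma extra_vb' x : (vb' n \in extra x) = ((x : nat) == 0).
Proof.
rewrite /extra; case: ifP => H; rewrite ?H /=; first by rewrite !inE !eqsimp.
by case: pickP => [j' _|_]; rewrite !inE ?eqsimp.
Qed.
Lemma extra_orig x u : (orig u \in extra x) = false.
Proof.
rewrite /extra; case: ifP => H; rewrite ?H /=; first by rewrite !inE !eqsimp.
by case: pickP => [j' _|_]; rewrite !inE ?eqsimp.
Qed.
Lemma extra_va x : (va n \in extra x) = false.
Proof.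
rewrite /extra; case: ifP => H; rewrite ?H /=; first by rewrite !inE !eqsimp.
by case: pickP => [j' _|_]; rewrite !inE ?eqsimp.
Qed.
Lemma extra_vb x : (vb n \in extra x) = false.
Proof.
rewrite /extra; case: ifP => H; rewrite ?H /=; first by rewrite !inE !eqsimp.
by case: pickP => [j' _|_]; rewrite !inE ?eqsimp.
Qed.

Hypothesis Hm : 0 < m.
Hypothesis Hp : forall j, j \in B (p j).
Hypothesis Bedge : forall x y, E x y -> exists i, (x \in B i) && (y \in B i).
Hypothesis Bcov : forall v : 'I_n, exists i, v \in B i.
Hypothesis Bint : forall v (i j l : 'I_m), i <= j -> j <= l -> v \in B i -> v \in B l -> v \in B j.

Lemma idx0_lt : 0 < m * n.+1. Proof. by rewrite muln_gt0 Hm. Qed.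
Definition idx0 : 'I_(m * n.+1) := Ordinal idx0_lt.
Lemma idxi_lt (i : 'I_m) : i * n.+1 < m * n.+1. Proof. by rewrite ltn_pmul2r // ltn_ord. Qed.
Definition idxi i : 'I_(m * n.+1) := Ordinal (idxi_lt i).
Lemma idxj_lt (j : 'I_n) : p j * n.+1 + j.+1 < m * n.+1.
Proof.
have H1 := ltn_ord (p j); have H2 := ltn_ord j.
apply: (@leq_trans ((p j).+1 * n.+1)); first by rewrite mulSn; lia.
by rewrite leq_mul2r H1 orbT.
Qed.
Definition idxj j : 'I_(m * n.+1) := Ordinal (idxj_lt j).

Lemma qo_idxi i : qo (idxi i) = i.
Proof. by apply: val_inj; rewrite /= mulnK. Qed.
Lemma qo_idxj j : qo (idxj j) = p j.
Proof. by apply: val_inj; rewrite /= divnMDl // divn_small ?addn0 // ltnS ltn_ord. Qed.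
Lemma mod_idxj j : (idxj j : nat) %% n.+1 = j.+1.
Proof. by rewrite /= modnMDl modn_small // ltnS ltn_ord. Qed.
Lemma idxj_neq0 j : ((idxj j : nat) == 0) = false.
Proof. by rewrite /= addnS. Qed.
Lemma idx0_eq0 : ((idx0 : nat) == 0) = true. Proof. by []. Qed.

Ltac memp := rewrite /PB in_setI ?orig_GV ?va_GV ?vb_GV ?va'_GV ?vb'_GV ?andbT;
  try (apply/andP; split => //); rewrite !in_setU ?extra_vj1 ?extra_vj2 ?extra_va' ?extra_vb'
  ?extra_orig ?extra_va ?extra_vb ?qo_idxi ?qo_idxj ?mod_idxj ?idxj_neq0 ?idx0_eq0 !inE
  ?orig_imset ?inr_imset ?eqsimp ?Hp ?eqxx ?orbT ?orbF /=.

Lemma PB_cover v : v \in GV k V0 chi -> exists x, v \in PB x.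
Proof.
move=> Hv; case: (gvP v) Hv => [u Hv|j Hv|j Hv|Hv|Hv|Hv|Hv].
- have [i Hi] := Bcov u; exists (idxi i); memp; by rewrite Hi.
- by exists (idxj j); memp.
- by exists (idxj j); memp.
- by exists idx0; memp.
- by exists idx0; memp.
- by exists idx0; memp.
- by exists idx0; memp.
Qed.

Ltac memh H := rewrite /PB in_setI in H; case/andP: H => H _;
  rewrite !in_setU ?extra_vj1 ?extra_vj2 ?extra_va' ?extra_vb' ?extra_orig ?extra_va ?extra_vb
  !inE ?orig_imset ?inr_imset ?eqsimp ?orbF ?orFb /= in H.

Ltac finp z := by exists z; apply/andP; split; memp.

Lemma PB_gadj x y : x \in GV k V0 chi -> y \in GV k V0 chi ->
  gadj E k V0 chi x y -> exists z, (x \in PB z) && (y \in PB z).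
Proof.
move=> Hx Hy; rewrite /gadj.
case/orP => [/existsP [u /existsP [v /and3P [/eqP Ex /eqP Ey Huv]]]|].
  subst; have [i /andP [H1 H2]] := Bedge Huv.
  by exists (idxi i); apply/andP; split; memp; rewrite ?H1 ?H2.
case/orP => [/andP [/eqP ? /eqP ?]|]; first by subst; finp idx0.
case/orP => [/andP [/eqP ? /eqP ?]|]; first by subst; finp idx0.
case/orP => [/andP [/eqP ? /eqP ?]|]; first by subst; finp idx0.
case/orP => [/existsP [j /and3P [Hj Hmid H]]|].
  by repeat case/orP: H => [/andP [/eqP ? /eqP ?]|H]; try (by subst; finp (idxj j));
    case/andP: H => [/eqP ? /eqP ?]; subst; finp (idxj j).
case/orP => [/existsP [j /and3P [Hj Hmid H]]|].
  by repeat case/orP: H => [/andP [/eqP ? /eqP ?]|H]; try (by subst; finp (idxj j));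
    case/andP: H => [/eqP ? /eqP ?]; subst; finp (idxj j).
case/existsP => [j /and3P [Hj Hmid H]].
by repeat case/orP: H => [/andP [/eqP ? /eqP ?]|H]; try (by subst; finp (idxj j));
  case/andP: H => [/eqP ? /eqP ?]; subst; finp (idxj j).
Qed.

Lemma PB_edge x y : x \in GV k V0 chi -> y \in GV k V0 chi ->
  GE E k V0 chi x y -> exists z, (x \in PB z) && (y \in PB z).
Proof.
move=> Hx Hy /orP [H|H]; first exact: PB_gadj.
by have [z Hz] := PB_gadj Hy Hx H; exists z; rewrite andbC.
Qed.

Lemma PB_GV v x : v \in PB x -> v \in GV k V0 chi.
Proof. by rewrite /PB in_setI => /andP []. Qed.

Lemma qo_mono (i j : 'I_(m * n.+1)) : i <= j -> qo i <= qo j.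
Proof. by move=> H; rewrite /= leq_div2r. Qed.

Lemma idx_eq (i j : 'I_(m * n.+1)) : qo i = qo j -> (i : nat) %% n.+1 = j %% n.+1 -> i = j.
Proof.
move=> H1 H2; apply: val_inj => /=.
rewrite (divn_eq i n.+1) (divn_eq j n.+1) H2.
by move: H1 => /(congr1 val) /= ->.
Qed.

Lemma PB_int v (i j l : 'I_(m * n.+1)) : i <= j -> j <= l -> v \in PB i -> v \in PB l -> v \in PB j.
Proof.
move=> Hij Hjl Hi Hl; have Hv := PB_GV Hi.
have same : i = l -> v \in PB j.
  move=> Eil; have Eij : j = i.
    apply: val_inj; apply/eqP; rewrite eqn_leq Hij andbT.
    by rewrite Eil.
  by rewrite Eij.
move: Hi Hl; case: (gvP v) Hv same => [u|j0|j0| | | |] Hv same Hi Hl.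
- memh Hi; memh Hl; memp.
  exact: (Bint (qo_mono Hij) (qo_mono Hjl) Hi Hl).
- apply: same; memh Hi; memh Hl; move: Hi Hl => /and3P [_ /eqP H1 /eqP H2] /and3P [_ /eqP H3 /eqP H4].
  by apply: idx_eq; [rewrite -H2 -H4 | rewrite H1 H3].
- apply: same; memh Hi; memh Hl; move: Hi Hl => /and3P [_ /eqP H1 /eqP H2] /and3P [_ /eqP H3 /eqP H4].
  by apply: idx_eq; [rewrite -H2 -H4 | rewrite H1 H3].
- by memp.
- apply: same; memh Hi; memh Hl; move: Hi Hl => /eqP H1 /eqP H2; by apply: val_inj; rewrite /= H1 H2.
- by memp.
- apply: same; memh Hi; memh Hl; move: Hi Hl => /eqP H1 /eqP H2; by apply: val_inj; rewrite /= H1 H2.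
Qed.

Lemma PB_card w : (forall i, #|B i| <= w.+1) -> forall x, #|PB x| <= (w + 4).+1.
Proof.
move=> HB x; rewrite /PB; apply: leq_trans (subset_leq_card (subsetIl _ _)) _.
apply: leq_trans (leq_card_setU _ _) _.
have He : #|extra x| <= 2.
  rewrite /extra; case: ifP => _; first by rewrite cards2; case: (_ != _).
  by case: pickP => [j _|_]; rewrite ?cards0 // cards2; case: (_ != _).
have Hu : #|@orig n @: B (qo x) :|: [set va n; vb n]| <= w.+1 + 2.
  apply: leq_trans (leq_card_setU _ _) _.
  apply: leq_add; first exact: leq_trans (leq_imset_card _ _) (HB _).
  by rewrite cards2; case: (_ != _).
move: He Hu; lia.
Qed.

End PW.


Lemma pw_part (n : nat) (E : rel 'I_n) (k : nat) (V0 : {set 'I_n}) (chi : 'I_n -> nat) :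
  (exists u v, E u v) ->
  forall w, pw_le [set: 'I_n] E w -> pw_le (GV k V0 chi) (GE E k V0 chi) (w + 4).
Proof.
move=> [u [v Euv]] w [m [B [H1 H2 H3 H4 H5]]].
have [i1 _] := H2 u (in_setT u).
have Hm : 0 < m by apply: leq_ltn_trans (leq0n i1) (ltn_ord i1).
pose i0 : 'I_m := Ordinal Hm.
pose p (j : 'I_n) := odflt i0 [pick i | j \in B i].
have Hp : forall j, j \in B (p j).
  move=> j; rewrite /p; case: pickP => [i Hi|Hn] //=.
  have [i Hi] := H2 j (in_setT j); by move: (Hn i); rewrite Hi.
have Bcov : forall v : 'I_n, exists i, v \in B i.
  by move=> x; apply: H2; rewrite in_setT.
have Bedge : forall x y, E x y -> exists i, (x \in B i) && (y \in B i).
  by move=> x y; apply: H3; rewrite in_setT.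
exists (m * n.+1), (PB k V0 chi B p); split.
- by move=> x; apply: subsetIr.
- move=> x; exact: (PB_cover p Hm Bcov).
- move=> x y; exact: (PB_edge Hm Hp Bedge).
- move=> x i j l; exact: (PB_int H4).
- exact: PB_card.
Qed.

Theorem lemma8 (n : nat) (E : rel 'I_n) (k : nat) (V0 : {set 'I_n})
    (chi : 'I_n -> nat) :
  symmetric E -> irreflexive E -> (exists u v, E u v) ->
  (forall j, j \in V0 -> 1 <= chi j <= k) ->
  (forall u v, u \in V0 -> v \in V0 -> E u v -> chi u != chi v) ->
  (forall w, tw_le [set: 'I_n] E w ->
     tw_le (GV k V0 chi) (GE E k V0 chi) (w + 2)) /\
  (forall w, pw_le [set: 'I_n] E w ->
     pw_le (GV k V0 chi) (GE E k V0 chi) (w + 4)).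
Proof.
move=> _ Eirr Hex _ _; split.
- exact: tw_part.
- exact: pw_part.
Qed.
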